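(* Let $G'$ be a connected graph and $x,v\in V(G')$ distinct vertices with $N_{G'}[x]\subseteq N_{G'}[v]$. Let $T$ be a search tree on $G=G'-x$ and $i\in\{0,\ldots,d_{T,v}\}$. Then $T(i,x,v)$ is a search tree on $G'$. Moreover, the vertices $T(i,x,v)$, $i\in\{0,\ldots,d_{T,v}\}$, lie on a path in $\mathcal{R}(G')$.
   Context: $N[\cdot]$ denotes the closed neighbourhood. For a connected graph $G$, a search tree on $G$ is a rooted tree with vertex set $V(G)$ defined recursively: its root is some vertex $r\in V(G)$, and the children of $r$ are the roots of search trees on the connected components of $G-r$. For a rooted tree $T$ and $w\in V(T)$, $T|w$ denotes the subtree rooted at $w$ and $d_{T,w}$ the distance from the root to $w$. Let $T$ be a search tree on $G$, let $b$ be a child of $a$ in $T$, and let $p$ be the parent of $a$ (if it exists). The $ab$-rotation transforms $T$ into the search tree $T'$ in which: $a$ is a child of $b$ and $b$ is a child of $p$ (or $b$ is the root if $a$ was the root); every subtree of $a$ in $T$ other than $T|b$ is a subtree of $a$ in $T'$; and every subtree $S$ of $b$ in $T$ is a subtree of $a$ in $T'$ if $a$ is adjacent in $G$ to some vertex of $S$, and a subtree of $b$ in $T'$ otherwise. The rotation graph $\mathcal{R}(G)$ has the search trees on $G$ as vertices, two adjacent iff they differ by one rotation. Insertion: for a rooted tree $T$, $v\in V(T)$ with $d=d_{T,v}$ and root-to-$v$ path $a_0,\ldots,a_d=v$, and $x\notin V(T)$: $T(0,x,v)$ has $x$ as new root with $T$ as its only subtree; for $1\le i\le d$, $T(i,x,v)$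 is obtained by subdividing the edge $a_{i-1}a_i$ with the new vertex $x$ (root unchanged). *)

(* Defs.v *)
(* Graphs are simple graphs given by a symmetric irreflexive
   relation e on a finite type V; a vertex subset S : {set V} denotes the
   induced subgraph G[S]. *)
From mathcomp Require Import all_boot.
Set Implicit Arguments. Unset Strict Implicit. Unset Printing Implicit Defensive.

Section Defs.
Variable V : finType.

Definition closed_nbhd (e : rel V) (x : V) : {set V} :=
  [set y | (y == x) || e x y].

Definition restrict_rel (e : rel V) (C : {set V}) : rel V :=
  [rel a b | [&& e a b, a \in C & b \in C]].
Definition conn (e : rel V) (C : {set V}) : Prop :=
  forall u w, u \in C -> w \in C -> connect (restrict_rel e C) u w.

Definition component (e : rel V) (S C : {set V}) : Prop :=
  [/\ C \subset S, C != set0, conn e C &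
      forall D : {set V}, C \subset D -> D \subset S -> conn e D -> D = C].

(* Rooted trees with vertices in V: a root and a parent function
   (None for the root and for vertices not in the tree). *)
Definition rtree : Type := (V * {ffun V -> option V})%type.
Definition rroot (t : rtree) : V := t.1.
Definition rpar (t : rtree) : V -> option V := fun u => t.2 u.

Definition vset (t : rtree) : {set V} :=
  [set u | (u == rroot t) || (rpar t u != None)].

Fixpoint upk (t : rtree) (k : nat) (u : V) : option V :=
  match k with 0 => Some u | k'.+1 => obind (rpar t) (upk t k' u) end.

Definition is_rtree (t : rtree) : Prop :=
  rpar t (rroot t) = None /\
  forall u, u \in vset t -> exists k, upk t k u = Some (rroot t).

Definition desc (t : rtree) (w : V) : {set V} :=
  [set u | [exists k : 'I_#|V|.+1, upk t k u == Some w]].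

Definition subtree (t : rtree) (w : V) : rtree :=
  (w, [ffun u => if (u \in desc t w) && (u != w) then rpar t u else None]).

Inductive search_tree (e : rel V) : {set V} -> rtree -> Prop :=
| SearchTree (S : {set V}) (t : rtree) :
    is_rtree t -> vset t = S -> conn e S ->
    (forall c, rpar t c = Some (rroot t) ->
        component e (S :\ rroot t) (desc t c) /\
        search_tree e (desc t c) (subtree t c)) ->
    (forall C, component e (S :\ rroot t) C ->
        exists c, rpar t c = Some (rroot t) /\ desc t c = C) ->
    search_tree e S t.

Fixpoint ups (t : rtree) (n : nat) (u : V) : seq V :=
  match n with
  | 0 => [:: u]
  | n'.+1 => if rpar t u is Some w then u :: ups t n' w else [:: u]
  end.

(* root-to-v path a_0, ..., a_d = v and the depth d = d_{T,v} *)
Definition rpath (t : rtree) (v : V) : seq V := rev (ups t #|V| v).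
Definition depth (t : rtree) (v : V) : nat := (size (rpath t v)).-1.

Definition insert (t : rtree) (i : nat) (x v : V) : rtree :=
  if i == 0 then
    (x, [ffun u => if u == x then None
                   else if u == rroot t then Some x else rpar t u])
  else
    let ai := nth v (rpath t v) i in
    let ai1 := nth v (rpath t v) i.-1 in
    (rroot t, [ffun u => if u == x then Some ai1
                         else if u == ai then Some x else rpar t u]).

Definition rotate (e : rel V) (t : rtree) (a b : V) : rtree :=
  (if rroot t == a then b else rroot t,
   [ffun u => if u == a then Some b
              else if u == b then rpar t a
              else if rpar t u == Some b then
                     (if [exists w in desc t u, e a w] then Some a else Some b)
              else rpar t u]).

Definition rot_adj (e : rel V) (S : {set V}) (t1 t2 : rtree) : Prop :=
  search_tree e S t1 /\ search_tree e S t2 /\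
  ((exists a b, rpar t1 b = Some a /\ t2 = rotate e t1 a b) \/
   (exists a b, rpar t2 b = Some a /\ t1 = rotate e t2 a b)).

End Defs.

(* Main.v *)
Require Import Defs.
From mathcomp Require Import all_boot zify.
Set Implicit Arguments. Unset Strict Implicit. Unset Printing Implicit Defensive.

Section Upk.
Variable V : finType.
Implicit Types (t : rtree V) (u w z : V).

Lemma upkS t k u : upk t k.+1 u = if rpar t u is Some p then upk t k p else None.
Proof.
elim: k u => [|k IH] u /=; first by case: (rpar t u).
by rewrite -/(upk t k.+1 u) IH; case: (rpar t u).
Qed.

Lemma upkD t k m u : upk t (k + m) u = obind (upk t m) (upk t k u).
Proof.
elim: k u => [|k IH] u //.
by rewrite addSn !upkS; case: (rpar t u).
Qed.

Lemma upk_none t k m u : upk t k u = None -> k <= m -> upk t m u = None.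
Proof.
move=> H /subnKC <-; rewrite addnC.
elim: (m - k) => [|n IH] //=; by rewrite IH.
Qed.

Lemma descP t u w : reflect (exists k, upk t k u = Some w) (u \in desc t w).
Proof.
rewrite inE; apply: (iffP existsP) => [[k /eqP Hk]|[k Hk]]; first by exists k.
have ex : exists k, upk t k u == Some w by exists k; apply/eqP.
case: (ex_minnP ex) => k0 /eqP Hk0 Hmin.
have Hsome : forall j, j <= k0 -> upk t j u <> None.
  by move=> j Hj Hn; move: (upk_none Hn Hj); rewrite Hk0.
case: (leqP k0 #|V|) => Hle.
  by exists (Ordinal (Hle : k0 < #|V|.+1)); apply/eqP.
exfalso.
pose f := fun j : 'I_k0.+1 => odflt u (upk t j u).
case: (boolP [exists i : 'I_k0.+1, exists j : 'I_k0.+1, (i < j) && (f i == f j)]).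
  move=> /existsP [i /existsP [j /andP [Hij /eqP Hf]]].
  have Hi := ltn_ord i; have Hj := ltn_ord j.
  have Ei : upk t i u = Some (f i).
    rewrite /f; case E: (upk t i u) => [y|] //; by exfalso; apply: (Hsome i).
  have Ej : upk t j u = Some (f j).
    rewrite /f; case E: (upk t j u) => [y|] //; by exfalso; apply: (Hsome j).
  have : upk t (i + (k0 - j)) u == Some w.
    rewrite upkD Ei Hf -Ej -upkD subnKC; first by rewrite Hk0.
    by rewrite -ltnS.
  move/Hmin; lia.
rewrite negb_exists => /forallP Hn.
have Hinj : injective f.
  move=> i j Hf; apply/eqP; case: (ltngtP i j) => [Hij|Hij|/val_inj -> //].
    by move: (Hn i) => /existsPn /(_ j); rewrite Hij Hf eqxx.
  by move: (Hn j) => /existsPn /(_ i); rewrite Hij Hf eqxx.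
move: (leq_card f Hinj); rewrite card_ord; lia.
Qed.

Lemma desc_refl t w : w \in desc t w.
Proof. by apply/descP; exists 0. Qed.

Lemma desc_trans t u w z : u \in desc t w -> w \in desc t z -> u \in desc t z.
Proof.
move=> /descP [k Hk] /descP [m Hm]; apply/descP; exists (k + m).
by rewrite upkD Hk.
Qed.

Lemma desc_step t u w p : rpar t u = Some p ->
  (u \in desc t w) = (u == w) || (p \in desc t w).
Proof.
move=> Hp; apply/descP/orP => [[[|k]]|[/eqP ->|/descP [k Hk]]].
- by move=> [->]; left.
- by rewrite upkS Hp => Hk; right; apply/descP; exists k.
- by exists 0.
- by exists k.+1; rewrite upkS Hp.
Qed.

Lemma desc_none t u w : rpar t u = None -> (u \in desc t w) = (u == w).
Proof.
move=> Hp; apply/descP/eqP => [[[|k]]|->]; last by exists 0.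
- by move=> [->].
- by rewrite upkS Hp.
Qed.

Lemma desc_lin t u a b : u \in desc t a -> u \in desc t b ->
  a \in desc t b \/ b \in desc t a.
Proof.
move=> /descP [k Hk] /descP [m Hm].
case: (leqP k m) => H.
  left; apply/descP; exists (m - k); by rewrite -Hm -[in RHS](subnKC H) upkD Hk.
right; apply/descP; exists (k - m); by rewrite -Hk -[in RHS](subnKC (ltnW H)) upkD Hm.
Qed.

Lemma desc_rootE t w : rpar t (rroot t) = None -> rroot t \in desc t w -> w = rroot t.
Proof. by move=> Hr; rewrite desc_none // => /eqP. Qed.

Lemma desc_vset t u w : u \in desc t w -> w \in vset t -> u \in vset t.
Proof.
case E: (rpar t u) => [p|].
  by move=> _ _; rewrite inE E orbT.
by rewrite desc_none // => /eqP ->.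
Qed.

Lemma vset_desc t : is_rtree t -> vset t = desc t (rroot t).
Proof.
move=> [Hr Ht]; apply/setP => u; apply/idP/idP.
  by move=> /Ht [k Hk]; apply/descP; exists k.
by move=> H; apply: (desc_vset H); rewrite inE eqxx.
Qed.

Lemma upk_iter t n u j : upk t n u = Some u -> upk t (j * n) u = Some u.
Proof. by move=> H; elim: j => [|j IH] //; rewrite mulSn upkD H. Qed.

Lemma rtree_acyc t u k : is_rtree t -> u \in vset t -> upk t k.+1 u = Some u -> False.
Proof.
move=> [Hr Ht] /Ht [K HK] Hc.
have HN : upk t K.+1 u = None by rewrite -addn1 upkD HK /= Hr.
have := upk_iter K.+1 Hc; rewrite (upk_none HN) //.
by rewrite -[X in X <= _]muln1 leq_mul2l ltn0Sn orbT.
Qed.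

Lemma desc_anti t u w : is_rtree t -> u \in vset t -> u \in desc t w ->
  w \in desc t u -> u = w.
Proof.
move=> Ht Hu /descP [[|k] Hk]; first by case: Hk.
move=> /descP [m Hm]; exfalso; apply: (rtree_acyc (k := k + m) Ht Hu).
by rewrite -addSn upkD Hk.
Qed.

Lemma par_vset t u p : is_rtree t -> rpar t u = Some p -> p \in vset t.
Proof.
move=> Ht Hp; have Hu : u \in vset t by rewrite inE Hp orbT.
move: Hu; rewrite (vset_desc Ht) (desc_step _ Hp) => /orP [/eqP Hu|//].
by move: Ht Hp => [Hr _]; rewrite Hu Hr.
Qed.

Lemma child_of t u : u \in desc t (rroot t) -> u != rroot t ->
  exists c, rpar t c = Some (rroot t) /\ u \in desc t c.
Proof.
move=> /descP [[|k] Hk]; first by case: Hk => ->; rewrite eqxx.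
move=> _; move: Hk => /=.
case E: (upk t k u) => [c|] //= Hc.
by exists c; split => //; apply/descP; exists k.
Qed.


Lemma rpar_sub t c u : rpar (subtree t c) u =
  if (u \in desc t c) && (u != c) then rpar t u else None.
Proof. by rewrite /rpar /subtree /= ffunE. Qed.

Lemma upk_sub t c u k z : is_rtree t -> c \in vset t -> u \in desc t c ->
  (upk (subtree t c) k z = Some u <-> upk t k z = Some u /\ z \in desc t c).
Proof.
move=> Ht Hc Hu; elim: k z => [|k IH] z.
  by split => [/= [->]|/= [[->] _]].
rewrite !upkS rpar_sub.
case: ifP => [/andP [Hz Hzc]|Hz].
  case E: (rpar t z) => [p|]; last by split => // [[]].
  rewrite IH; split => [[-> _]|[-> _]] //; split => //.
  by move: Hz; rewrite (desc_step _ E) (negbTE Hzc).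
split=> // [[Hk Hzd]]; exfalso.
move: Hz; rewrite Hzd /= => /negbFE /eqP Hzc; subst z.
have Hku : c \in desc t u by apply/descP; exists k.+1; rewrite upkS.
have Huc := desc_anti Ht Hc Hku Hu.
subst u; apply: (rtree_acyc (k := k) Ht Hc); by rewrite upkS.
Qed.

Lemma desc_sub t c u : is_rtree t -> c \in vset t -> u \in desc t c ->
  desc (subtree t c) u = desc t u.
Proof.
move=> Ht Hc Hu; apply/setP => z; apply/descP/descP.
  by move=> [k /(upk_sub _ _ Ht Hc Hu) [Hk _]]; exists k.
move=> [k Hk]; exists k; apply/(upk_sub _ _ Ht Hc Hu); split => //.
by apply: (desc_trans _ Hu); apply/descP; exists k.
Qed.

Lemma vset_sub t c : is_rtree t -> c \in vset t -> vset (subtree t c) = desc t c.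
Proof.
move=> Ht Hc; apply/setP => u; rewrite [in LHS]inE rpar_sub /=.
case: (eqVneq u c) => [->|Huc]; first by rewrite desc_refl.
rewrite andbT /=; case Hd: (u \in desc t c) => //.
case E: (rpar t u) => //.
by move: Hd; rewrite desc_none // (negbTE Huc).
Qed.

Lemma rtree_sub t c : is_rtree t -> c \in vset t -> is_rtree (subtree t c).
Proof.
move=> Ht Hc; split; first by rewrite rpar_sub /= eqxx andbF.
move=> u; rewrite vset_sub // => /descP [k Hk]; exists k.
by apply/(upk_sub _ _ Ht Hc (desc_refl _ _)); split => //; apply/descP; exists k.
Qed.


Lemma ups_spec t n u k : rpar t (rroot t) = None -> upk t k u = Some (rroot t) ->
  k <= n ->
  size (ups t n u) = k.+1 /\ forall j, j <= k -> upk t j u = Some (nth u (ups t n u) j).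
Proof.
move=> Hr; elim: n u k => [|n IH] u k Hk Hkn.
  move: Hkn; rewrite leqn0 => /eqP Hk0; subst k.
  by split => // j; rewrite leqn0 => /eqP ->.
rewrite /=; case E: (rpar t u) => [w|].
  case: k Hk Hkn => [|k] Hk Hkn.
    by move: Hk => /= [Hu]; rewrite Hu Hr in E.
  rewrite upkS E in Hk.
  have [Hs Hn] := IH w k Hk Hkn.
  split; first by rewrite /= Hs.
  move=> [|j] Hj //; rewrite upkS E /= (Hn j Hj); congr Some.
  by apply: set_nth_default; rewrite Hs.
case: k Hk Hkn => [|k] Hk Hkn.
  by split => // j; rewrite leqn0 => /eqP ->.
by rewrite upkS E in Hk.
Qed.

End Upk.

Section Conn.
Variable V : finType.
Variable e : rel V.
Hypothesis esym : symmetric e.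
Implicit Types (C D S : {set V}).

Lemma connect_mono C D a b : C \subset D ->
  connect (restrict_rel e C) a b -> connect (restrict_rel e D) a b.
Proof.
move=> HCD; apply: connect_sub => y z /= /and3P [Hyz Hy Hz].
by apply: connect1; apply/and3P; split => //; apply: (subsetP HCD).
Qed.

Lemma conn_union C D u : conn e C -> conn e D -> u \in C -> u \in D ->
  conn e (C :|: D).
Proof.
move=> HC HD HuC HuD a b; rewrite !inE.
have sC : C \subset C :|: D by apply: subsetUl.
have sD : D \subset C :|: D by apply: subsetUr.
move=> /orP [Ha|Ha] /orP [Hb|Hb].
- exact: connect_mono sC (HC _ _ Ha Hb).
- apply: (connect_trans (connect_mono sC (HC _ _ Ha HuC))).
  exact: connect_mono sD (HD _ _ HuD Hb).
- apply: (connect_trans (connect_mono sD (HD _ _ Ha HuD))).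
  exact: connect_mono sC (HC _ _ HuC Hb).
- exact: connect_mono sD (HD _ _ Ha Hb).
Qed.

Lemma conn_pair a b : e a b -> conn e [set a; b].
Proof.
move=> Hab.
have Ha : a \in [set a; b] by rewrite !inE eqxx.
have Hb : b \in [set a; b] by rewrite !inE eqxx orbT.
rewrite /conn => y z Hy Hz; case/set2P: Hy => ->; case/set2P: Hz => ->;
  try exact: connect0; apply: connect1; apply/and3P; split => //.
by rewrite esym.
Qed.

Lemma connect_clos C (P : {set V}) a b :
  connect (restrict_rel e C) a b -> a \in P ->
  (forall y z, y \in P -> z \in C -> e y z -> z \in P) -> b \in P.
Proof.
move=> /connectP [p Hp ->] Ha Hcl.
elim: p a Hp Ha => [|z p IH] a //= /andP [/and3P [Haz _ Hz] Hp] Ha.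
apply: (IH z Hp); exact: Hcl Ha Hz Haz.
Qed.

Lemma comp_eq S C D u : component e S C -> component e S D -> u \in C -> u \in D ->
  C = D.
Proof.
move=> [HCS _ HC HCm] [HDS _ HD HDm] HuC HuD.
have Hu := conn_union HC HD HuC HuD.
have HS : C :|: D \subset S by rewrite subUset HCS HDS.
rewrite -(HCm _ (subsetUl C D) HS Hu).
exact: HDm _ (subsetUr C D) HS Hu.
Qed.

Definition good S (t : rtree V) :=
  [/\ is_rtree t, vset t = S, forall u, u \in S -> conn e (desc t u) &
      forall a b, a \in S -> b \in S -> e a b -> a \in desc t b \/ b \in desc t a].


Lemma st_good S t : search_tree e S t -> good S t.
Proof.
suff H : forall n S t, #|S| < n -> search_tree e S t -> good S t.
  by apply: H (ltnSn _).
elim=> [|n IHn] S0 t0 Hn Hst; first by rewrite ltn0 in Hn.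
clear S t; case: Hst Hn => S t Hr Hv Hconn Hch Hcomp Hn.
set r := rroot t.
have Hdr : desc t r = S by rewrite -(vset_desc Hr) Hv.
have HrS : r \in S by rewrite -Hv inE eqxx.
have Hcv : forall c, rpar t c = Some r -> c \in vset t.
  by move=> c Hc; rewrite inE Hc orbT.
have Hchild : forall c, rpar t c = Some r ->
    good (desc t c) (subtree t c) /\ component e (S :\ r) (desc t c).
  move=> c Hc; case: (Hch c Hc) => Hcomp_c Hst_c.
  have Hlt : #|desc t c| < #|S|.
    case: Hcomp_c => Hsub _ _ _; rewrite (cardsD1 r S) HrS add1n ltnS.
    exact: subset_leq_card.
  split => //; apply: IHn Hst_c; lia.
split => //.
- move=> u Hu; case: (eqVneq u r) => [->|Hur]; first by rewrite Hdr.
  have Hu' : u \in desc t r by rewrite Hdr.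
  have [c [Hc Huc]] := child_of Hu' Hur.
  have [[Hr' Hv' Hconn' _] _] := Hchild c Hc.
  rewrite -(desc_sub Hr (Hcv c Hc) Huc); exact: Hconn'.
- move=> a b Ha Hb Hab.
  case: (eqVneq a r) => [->|Har]; first by right; rewrite Hdr.
  case: (eqVneq b r) => [->|Hbr]; first by left; rewrite Hdr.
  have Ha' : a \in desc t r by rewrite Hdr.
  have [c [Hc Hac]] := child_of Ha' Har.
  have [[Hr' Hv' Hconn' Hed] [Hsub _ Hcc Hmax]] := Hchild c Hc.
  have Hbc : b \in desc t c.
    have HD := conn_union Hcc (conn_pair Hab) Hac (setU11 a [set b]).
    have HDS : desc t c :|: [set a; b] \subset S :\ r.
      rewrite subUset Hsub; apply/subsetP => y /set2P [->|->];
        by rewrite !inE ?Har ?Hbr ?Ha ?Hb.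
    by rewrite -(Hmax _ (subsetUl _ _) HDS HD) !inE eqxx !orbT.
  rewrite -(desc_sub Hr (Hcv c Hc) Hbc) -(desc_sub Hr (Hcv c Hc) Hac).
  exact: Hed.
Qed.


Lemma good_st S t : good S t -> search_tree e S t.
Proof.
suff H : forall n S t, #|S| < n -> good S t -> search_tree e S t.
  by apply: H (ltnSn _).
elim=> [|n IHn] S0 t0 Hn Hg; first by rewrite ltn0 in Hn.
clear S t; case: Hg => Hr Hv Hconn Hed.
set S := S0 in Hv Hconn Hed Hn *; set t := t0 in Hr Hv Hconn Hed *.
set r := rroot t.
have Hdr : desc t r = S by rewrite -(vset_desc Hr) Hv.
have HrS : r \in S by rewrite -Hv inE eqxx.
have Hcv : forall c, rpar t c = Some r -> c \in vset t.
  by move=> c Hc; rewrite inE Hc orbT.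
have Hcomp_c : forall c, rpar t c = Some r -> component e (S :\ r) (desc t c).
  move=> c Hc.
  have Hsub : desc t c \subset S :\ r.
    apply/subsetP => z Hz; rewrite !inE.
    have Hzv := desc_vset Hz (Hcv c Hc); rewrite -Hv Hzv andbT.
    apply/eqP => Hzr; rewrite Hzr in Hz.
    have Hcr := desc_rootE (proj1 Hr) Hz.
    by move: Hc; rewrite Hcr (proj1 Hr).
  split => //.
  - by apply/set0Pn; exists c; exact: desc_refl.
  - by apply: Hconn; rewrite -Hv; exact: Hcv.
  move=> D HcD HDS HD; apply/eqP; rewrite eqEsubset HcD andbT.
  apply/subsetP => z Hz.
  have HcDm : c \in D := subsetP HcD c (desc_refl t c).
  apply: (connect_clos (HD c z HcDm Hz)) (desc_refl t c) _.
  move=> y z' Hy Hz' Hyz.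
  have /setD1P [Hz'r Hz'S] := subsetP HDS z' Hz'.
  have /setD1P [_ HyS] := subsetP Hsub y Hy.
  case: (Hed y z' HyS Hz'S Hyz) => H; last exact: desc_trans H Hy.
  case: (desc_lin Hy H) => // Hcz.
  move: Hcz; rewrite (desc_step _ Hc) => /orP [/eqP <-|Hrz]; first exact: desc_refl.
  by move: Hz'r; rewrite (desc_rootE (proj1 Hr) Hrz) eqxx.
apply: (SearchTree Hr Hv).
- by rewrite -Hdr; apply: Hconn.
- move=> c Hc; split; first exact: Hcomp_c.
  have [Hsub _ _ _] := Hcomp_c c Hc.
  have Hlt : #|desc t c| < #|S|.
    rewrite (cardsD1 r S) HrS add1n ltnS; exact: subset_leq_card.
  have Hc' := Hcv c Hc.
  apply: IHn; first by apply: leq_trans Hlt _; rewrite -ltnS.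
  split.
  + exact: rtree_sub.
  + exact: vset_sub.
  + move=> u Hu; rewrite desc_sub //; apply: Hconn; rewrite -Hv; exact: desc_vset Hu Hc'.
  + move=> a b Ha Hb Hab; rewrite !desc_sub //; apply: Hed => //; rewrite -Hv.
    * exact: desc_vset Ha Hc'.
    * exact: desc_vset Hb Hc'.
- move=> C HC; case: (HC) => HCS HC0 _ _.
  case/set0Pn: HC0 => u Hu.
  have := subsetP HCS u Hu; rewrite !inE => /andP [Hur HuS].
  have Hu' : u \in desc t r by rewrite Hdr.
  have [c [Hc Huc]] := child_of Hu' Hur.
  exists c; split => //; exact: comp_eq (Hcomp_c c Hc) HC Huc Hu.
Qed.

End Conn.

Section Main.
Variables (V : finType) (e : rel V) (x v : V) (t : rtree V).
Hypotheses (esym : symmetric e) (eirr : irreflexive e) (Hxv : x != v)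
  (Hnb : closed_nbhd e x \subset closed_nbhd e v) (Hst : search_tree e [set~ x] t).

Local Notation a j := (nth v (rpath t v) j).
Local Notation K := (depth t v).
Local Notation r := (rroot t).

Lemma Hgood : good e [set~ x] t. Proof. exact: (st_good esym Hst). Qed.
Lemma Hrt : is_rtree t. Proof. by case: Hgood. Qed.
Lemma Hvt : vset t = [set~ x]. Proof. by case: Hgood. Qed.
Lemma Hrr : rpar t r = None. Proof. exact: (proj1 Hrt). Qed.

Lemma Hex : e x v.
Proof.
have : x \in closed_nbhd e v by apply: (subsetP Hnb); rewrite inE eqxx.
by rewrite inE (negbTE Hxv) /= esym.
Qed.

Lemma nbx w : e x w -> w = v \/ e v w.
Proof.
move=> H; have : w \in closed_nbhd e v by apply: (subsetP Hnb); rewrite inE H orbT.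
by rewrite inE => /orP [/eqP ->|]; [left|right].
Qed.

Lemma path_ok : upk t K v = Some r /\
  forall j, j <= K -> upk t (K - j) v = Some (a j).
Proof.
have Hv : v \in vset t by rewrite Hvt !inE eq_sym.
move: Hv; rewrite (vset_desc Hrt) inE => /existsP [k /eqP Hk].
have [Hs Hn] := ups_spec (n := #|V|) Hrr Hk (ltnSE (ltn_ord k)).
have HK : K = k by rewrite /depth /rpath size_rev Hs.
rewrite HK; split => // j Hj.
rewrite /rpath nth_rev Hs ?ltnS // subSS; apply: Hn; exact: leq_subr.
Qed.

Lemma HK : upk t K v = Some r. Proof. exact: (proj1 path_ok). Qed.
Lemma Ha j : j <= K -> upk t (K - j) v = Some (a j). Proof. exact: (proj2 path_ok). Qed.

Lemma a0 : a 0 = r.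
Proof. by move: (Ha (leq0n K)); rewrite subn0 HK => [[]]. Qed.

Lemma aK : a K = v.
Proof. by move: (Ha (leqnn K)); rewrite subnn => [[]]. Qed.

Lemma aupk j l : j <= l -> l <= K -> upk t (l - j) (a l) = Some (a j).
Proof.
move=> Hjl HlK.
have : K - j = (K - l) + (l - j) by lia.
move=> E; move: (Ha (leq_trans Hjl HlK)); rewrite E upkD Ha //.
Qed.

Lemma adesc j l : j <= l -> l <= K -> a l \in desc t (a j).
Proof. by move=> H1 H2; apply/descP; exists (l - j); apply: aupk. Qed.

Lemma vdesc j : j <= K -> v \in desc t (a j).
Proof. by move=> H; rewrite -{1}aK; apply: adesc. Qed.

Lemma avset j : j <= K -> a j \in vset t.
Proof.
move=> H; rewrite (vset_desc Hrt) -a0; exact: adesc.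
Qed.

Lemma ax j : j <= K -> a j != x.
Proof. by move=> /avset; rewrite Hvt !inE. Qed.

Lemma apar j : j < K -> rpar t (a j.+1) = Some (a j).
Proof.
move=> H; have := aupk (leqnSn j) H; by rewrite subSnn /=.
Qed.

Lemma ainj j l : j <= K -> l <= K -> a j = a l -> j = l.
Proof.
wlog Hjl : j l / j <= l.
  move=> W Hj Hl E; case: (leqP j l) => H; first exact: W.
  by symmetry; apply: W => //; apply: ltnW.
move=> Hj Hl E; move: Hjl; rewrite leq_eqVlt => /orP [/eqP //|Hlt].
exfalso; have := aupk (ltnW Hlt) Hl; rewrite E.
have -> : l - j = (l - j).-1.+1 by lia.
apply: rtree_acyc Hrt (avset Hl).
Qed.

Lemma anc b : v \in desc t b -> exists2 j, j <= K & b = a j.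
Proof.
move=> /descP [m Hm].
case: (leqP m K) => H.
  exists (K - m); first exact: leq_subr.
  by move: (Ha (leq_subr m K)); rewrite subKn // Hm => [[]].
exfalso; move: Hm.
have -> : m = K + (m - K).-1.+1 by lia.
rewrite upkD HK; change (upk t (m - K).-1.+1 r = Some b -> False); by rewrite upkS Hrr.
Qed.


Local Notation T i := (insert t i x v).

Lemma rootT i : rroot (T i) = if i == 0 then x else r.
Proof. by rewrite /insert; case: ifP. Qed.

Lemma parT i u : rpar (T i) u = if u == x then (if i == 0 then None else Some (a i.-1))
  else if u == a i then Some x else rpar t u.
Proof.
rewrite /insert; case: (eqVneq i 0) => [->|Hi0] /=; rewrite /rpar /= ffunE //.
by rewrite a0.
Qed.

Lemma parT_x0 u : u != x -> u != a 0 -> rpar (T 0) u = rpar t u.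
Proof. by move=> H1 H2; rewrite parT (negbTE H1) (negbTE H2). Qed.

Section Ins.
Variable i : nat.
Hypothesis Hi : i <= K.

Definition PA u := forall w, (u \in desc (T i) w) =
  if w == x then u \in desc t (a i) else u \in desc t w.

Lemma stepA u : u != x -> (forall p, rpar t u = Some p -> PA p) -> PA u.
Proof.
move=> Hux IHp w.
case: (eqVneq u (a i)) => [Hua|Huai].
  have HpT : rpar (T i) u = Some x by rewrite parT (negbTE Hux) Hua eqxx.
  rewrite (desc_step _ HpT).
  case: (eqVneq i 0) => [Hi0|Hi0].
    have HxT : rpar (T i) x = None by rewrite parT eqxx Hi0.
    rewrite (desc_none _ HxT) Hua Hi0 a0 (desc_none _ Hrr).
    case: (eqVneq w x) => [->|Hwx]; first by rewrite !eqxx ?orbT.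
    by rewrite orbF (desc_none _ Hrr).
  have HxT : rpar (T i) x = Some (a i.-1) by rewrite parT eqxx (negbTE Hi0).
  have Hip : i = i.-1.+1 by lia.
  have Hpa : rpar t (a i) = Some (a i.-1) by rewrite {1}Hip; apply: apar; lia.
  rewrite (desc_step _ HxT) (IHp (a i.-1)) ?Hua //.
  case: (eqVneq w x) => [->|Hwx]; first by rewrite orbT desc_refl.
  by rewrite /= (desc_step _ Hpa).
have HpT : rpar (T i) u = rpar t u by rewrite parT (negbTE Hux) (negbTE Huai).
case E: (rpar t u) => [p|].
  have E' : rpar (T i) u = Some p by rewrite HpT.
  rewrite (desc_step _ E') (IHp p E).
  case: (eqVneq w x) => [->|Hwx]; rewrite (desc_step _ E) ?eqxx //.
  by rewrite (negbTE Hux) (negbTE Huai).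
have E' : rpar (T i) u = None by rewrite HpT.
rewrite (desc_none _ E').
case: (eqVneq w x) => [->|Hwx]; rewrite (desc_none _ E) ?eqxx //.
by rewrite (negbTE Hux) (negbTE Huai).
Qed.

Lemma descA u : u != x -> PA u.
Proof.
move=> Hux.
have : u \in vset t by rewrite Hvt !inE.
move=> /(proj2 Hrt) [k Hk].
elim: k u Hux Hk => [|k IH] u Hux Hk.
  apply: stepA => // p; move: Hk => /= [->]; by rewrite Hrr.
apply: stepA => // p Hp; apply: IH; last by rewrite upkS Hp in Hk.
by have := par_vset Hrt Hp; rewrite Hvt !inE.
Qed.

Lemma descB w : (x \in desc (T i) w) = (w == x) || ((0 < i) && (a i.-1 \in desc t w)).
Proof.
case: (eqVneq i 0) => [Hi0|Hi0].
  have HxT : rpar (T i) x = None by rewrite parT eqxx Hi0.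
  by rewrite (desc_none _ HxT) Hi0 orbF eq_sym.
have HxT : rpar (T i) x = Some (a i.-1) by rewrite parT eqxx (negbTE Hi0).
rewrite (desc_step _ HxT) descA; last by apply: ax; lia.
rewrite lt0n Hi0 /= eq_sym.
by case: (eqVneq w x) => [->|].
Qed.


Lemma Hrx : r != x.
Proof. by rewrite -a0; apply: ax. Qed.

Lemma root_in u : u \in desc (T i) (rroot (T i)).
Proof.
rewrite rootT; case: (eqVneq i 0) => [Hi0|Hi0].
  case: (eqVneq u x) => [->|Hux]; first exact: desc_refl.
  by rewrite descA // eqxx Hi0 a0 -(vset_desc Hrt) Hvt !inE Hux.
case: (eqVneq u x) => [->|Hux].
  rewrite descB (negbTE Hrx) lt0n Hi0 /= -a0; apply: adesc => //; lia.
by rewrite descA // (negbTE Hrx) -(vset_desc Hrt) Hvt !inE Hux.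
Qed.

Lemma edge_x c : c != x -> e x c -> x \in desc (T i) c \/ c \in desc (T i) x.
Proof.
move=> Hcx Hxc.
have Hvc : v \in desc t c \/ c \in desc t v.
  case: (nbx Hxc) => [->|Hvc]; first by left; apply: desc_refl.
  have [_ _ _ Hed] := Hgood; apply: Hed => //; rewrite !inE ?Hcx //.
  by rewrite eq_sym.
case: Hvc => [Hvc|Hcv].
  have [j Hj ->] := anc Hvc.
  case: (leqP i j) => Hij.
    by right; rewrite descA ?ax // eqxx; apply: adesc.
  left; rewrite descB; apply/orP; right; apply/andP; split; first lia.
  apply: adesc; lia.
right; rewrite descA // eqxx; exact: desc_trans Hcv (vdesc Hi).
Qed.

Lemma goodT : good e [set: V] (T i).
Proof.
have [_ _ Hconn Hed] := Hgood.
have Hx_nt : forall w, w != x -> x \in desc t w = false.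
  move=> w Hwx; apply/negP => H.
  have : x \in vset t by apply: (desc_vset H); rewrite Hvt !inE.
  by rewrite Hvt !inE eqxx.
split.
- split.
    rewrite rootT parT; case: (eqVneq i 0) => [Hi0|Hi0]; first by rewrite eqxx.
    rewrite (negbTE Hrx); case: (eqVneq r (a i)) => [E|_]; last exact: Hrr.
    by exfalso; move: E; rewrite -a0 => /ainj => /(_ (leq0n _) Hi) E; rewrite -E eqxx in Hi0.
  by move=> u _; apply/descP; apply: root_in.
- apply/setP => u; rewrite in_setT; apply: (desc_vset (root_in u)); by rewrite inE eqxx.
- move=> w _; case: (eqVneq w x) => [->|Hwx].
    have -> : desc (T i) x = [set x; v] :|: desc t (a i).
      apply/setP => z; rewrite in_setU in_set2; case: (eqVneq z x) => [->|Hzx]; first by rewrite desc_refl.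
      rewrite descA // eqxx /=; case: (eqVneq z v) => [->|] //=; exact: vdesc.
    apply: (conn_union (conn_pair esym Hex) (Hconn _ _)); last exact: vdesc.
      by rewrite !inE; apply: ax.
    by rewrite !inE eqxx orbT.
  case: (boolP ((0 < i) && (a i.-1 \in desc t w))) => Hc.
    have Hvw : v \in desc t w.
      move: Hc => /andP [_ H]; apply: (desc_trans _ H); apply: vdesc; lia.
    have -> : desc (T i) w = [set x; v] :|: desc t w.
      apply/setP => z; rewrite in_setU in_set2; case: (eqVneq z x) => [->|Hzx].
        by rewrite descB Hc orbT.
      rewrite descA // (negbTE Hwx) /=; case: (eqVneq z v) => [->|] //=.
    apply: (conn_union (u := v) (conn_pair esym Hex) (Hconn _ _)) => //.
      by rewrite !inE.
    by rewrite !inE eqxx orbT.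
  have -> : desc (T i) w = desc t w.
    apply/setP => z; case: (eqVneq z x) => [->|Hzx].
      by rewrite descB (negbTE Hwx) (negbTE Hc) Hx_nt.
    by rewrite descA // (negbTE Hwx).
  by apply: Hconn; rewrite !inE.
- move=> b c _ _ Hbc.
  case: (eqVneq b x) => [Hb|Hbx]; case: (eqVneq c x) => [Hc|Hcx].
  + by move: Hbc; rewrite Hb Hc eirr.
  + by rewrite Hb; apply: edge_x => //; rewrite -Hb.
  + rewrite Hc; case: (edge_x Hbx) => [|H|H]; [by rewrite -Hc esym| by right | by left].
  + rewrite !descA // (negbTE Hbx) (negbTE Hcx); apply: Hed => //; by rewrite !inE.
Qed.

Lemma stT : search_tree e [set: V] (T i).
Proof. exact: (good_st goodT). Qed.

End Ins.


Lemma insS i : insert t i.+1 x v =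
  (r, [ffun u => if u == x then Some (a i) else if u == a i.+1 then Some x else rpar t u]).
Proof. by []. Qed.

Lemma anc_child i u : i < K -> rpar t u = Some (a i) -> v \in desc t u -> u = a i.+1.
Proof.
move=> HiK Hp /anc [[|j] Hj Hu].
  by move: Hp; rewrite Hu a0 Hrr.
move: Hp; rewrite Hu apar // => [[/ainj]] -> //; lia.
Qed.

Lemma rotT i : i < K -> rotate e (T i) x (a i) = T i.+1.
Proof.
move=> HiK; have Hi : i <= K by lia.
have [_ _ _ Hed] := Hgood.
have Hneq : (a i == a i.+1) = false.
  by apply/eqP => /ainj; lia.
rewrite insS /rotate; congr pair.
  rewrite rootT; case: (eqVneq i 0) => [->|Hi0] /=; first by rewrite eqxx a0.
  by rewrite (negbTE Hrx).
apply/ffunP => u; rewrite !ffunE.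
case: (eqVneq u x) => [Hu|Hux]; first by [].
case: (eqVneq u (a i)) => [->|Huai].
  rewrite parT eqxx Hneq; case: (eqVneq i 0) => [->|Hi0]; first by rewrite a0 Hrr.
  have Hip : i = i.-1.+1 by lia.
  by rewrite {2}Hip apar //; lia.
rewrite parT (negbTE Hux) (negbTE Huai).
case: (eqVneq (rpar t u) (Some (a i))) => [Hp|Hp].
  case: (eqVneq u (a i.+1)) => [Hu|Hu].
    have -> : [exists w in desc (T i) u, e x w] by
      apply/existsP; exists v; rewrite descA ?(negbTE Hux) ?Hu ?vdesc ?Hex // eq_sym.
    done.
  have -> : [exists w in desc (T i) u, e x w] = false.
    apply/existsP => [[w /andP [Hw Hxw]]].
    have Hwx : w != x by apply/eqP => Ew; move: Hxw; rewrite Ew eirr.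
    move: Hw; rewrite descA // (negbTE Hux) => Hw.
    have Hvu : ~ (v \in desc t u).
      by move=> H; move/eqP: Hu; apply; apply: anc_child HiK Hp H.
    case: (nbx Hxw) => [Ew|Hvw]; first by apply: Hvu; rewrite -Ew.
    have Hv1 : v \in [set~ x] by rewrite !inE eq_sym.
    have Hw1 : w \in [set~ x] by rewrite !inE.
    have [H|H] := Hed v w Hv1 Hw1 Hvw.
      by apply: Hvu; apply: desc_trans H Hw.
    case: (desc_lin Hw H) => [Huv|//].
    have Hu1 : u \in desc t (a i.+1) by apply: desc_trans Huv (vdesc _).
    move: Hu1; rewrite (desc_step _ Hp) (negbTE Hu) /= => H1.
    have H2 : a i.+1 \in desc t (a i) by apply: adesc.
    have := desc_anti Hrt (avset Hi) H1 H2; move/eqP; by rewrite Hneq.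
  done.
case: (eqVneq u (a i.+1)) => [Hu|//].
by move: Hp; rewrite Hu apar // eqxx.
Qed.

End Main.

Unset Implicit Arguments.

Theorem lemma2p2 (V : finType) (e : rel V) (esym : symmetric e)
    (eirr : irreflexive e) (x v : V) :
  conn e [set: V] -> x != v -> closed_nbhd e x \subset closed_nbhd e v ->
  forall t : rtree V, search_tree e [set~ x] t ->
  (forall i, i <= depth t v -> search_tree e [set: V] (insert t i x v)) /\
  (exists s : seq (rtree V),
     uniq s /\
     (forall u, u \in s -> search_tree e [set: V] u) /\
     (forall j, j.+1 < size s -> rot_adj e [set: V] (nth t s j) (nth t s j.+1)) /\
     (forall i, i <= depth t v -> insert t i x v \in s)).
Proof.
move=> _ Hxv Hnb t Hst.
have HS := stT esym eirr Hxv Hnb Hst.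
have HP := parT esym Hxv Hst.
have HR := rotT esym eirr Hxv Hnb Hst.
split; first exact: HS.
exists [seq insert t i x v | i <- iota 0 (depth t v).+1].
split; [|split; [|split]].
- rewrite map_inj_in_uniq ?iota_uniq // => i j; rewrite !mem_iota /= !add0n => Hi Hj E.
  have : rpar (insert t i x v) x = rpar (insert t j x v) x by rewrite E.
  rewrite !HP eqxx.
  case: i Hi {E} => [|i] Hi; case: j Hj => [|j] Hj //= [].
  move=> E'; rewrite ltnS in Hi; rewrite ltnS in Hj.
  by rewrite (ainj esym Hxv Hnb Hst (ltnW Hi) (ltnW Hj) E').
- move=> u /mapP [i Hi ->]; apply: HS; rewrite mem_iota add0n ltnS in Hi; by case/andP: Hi.
- move=> j; rewrite size_map size_iota => Hj.
  have Hj1 : j < (depth t v).+1 by apply: ltnW.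
  have Hn : forall k, k < (depth t v).+1 ->
      nth t [seq insert t i x v | i <- iota 0 (depth t v).+1] k = insert t k x v.
    by move=> k Hk; rewrite (nth_map 0 t) ?size_iota // nth_iota.
  rewrite (Hn _ Hj) (Hn _ Hj1).
  rewrite ltnS in Hj.
  split; first by apply: HS; apply: ltnW.
  split; first by apply: HS.
  left; exists x, (nth v (rpath t v) j); split; last by rewrite HR.
  by rewrite HP eqxx (negbTE (ax esym Hxv Hnb Hst (ltnW Hj))).
- by move=> i Hi; apply/mapP; exists i => //; rewrite mem_iota add0n ltnS Hi.
Qed.
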